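(* Under the setting and assumptions (A1)–(A5) described in the context, define for $t\ge 0$ \[ S(t)=\tilde S e^{(\beta/\gamma)\tilde R}\varphi^{-1}(t),\qquad E(t)=\tilde E e^{-\delta t}+\tilde S e^{(\beta/\gamma)\tilde R}e^{-\delta t}\int_{\varphi^{-1}(t)}^{e^{-(\beta/\gamma)\tilde R}}e^{\delta\varphi(v)}\,dv, \] \[ I(t)=N-\tilde S e^{(\beta/\gamma)\tilde R}\varphi^{-1}(t)+\frac{\gamma}{\beta}\log\varphi^{-1}(t)-\tilde E e^{-\delta t}-\tilde S e^{(\beta/\gamma)\tilde R}e^{-\delta t}\int_{\varphi^{-1}(t)}^{e^{-(\beta/\gamma)\tilde R}}e^{\delta\varphi(v)}\,dv, \qquad R(t)=-\frac{\gamma}{\beta}\log\varphi^{-1}(t). \] Then $(S(t),E(t),I(t),R(t))$ is a solution of the initial value problem $S'=-\beta SI$, $E'=\beta SI-\delta E$, $I'=\delta E-\gamma I$, $R'=\gamma I$ for $t>0$, with $S(0)=\tilde S$, $E(0)=\tilde E$, $I(0)=\tilde I$, $R(0)=\tilde R$.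
   Context: Let $\beta,\gamma,\delta>0$ be constants and $\tilde S,\tilde E,\tilde I,\tilde R$ real numbers with $N:=\tilde S+\tilde E+\tilde I+\tilde R>0$. The SEIR initial value problem is $S'(t)=-\beta S(t)I(t)$, $E'(t)=\beta S(t)I(t)-\delta E(t)$, $I'(t)=\delta E(t)-\gamma I(t)$, $R'(t)=\gamma I(t)$ for $t>0$, with $S(0)=\tilde S$, $E(0)=\tilde E$, $I(0)=\tilde I$, $R(0)=\tilde R$; a solution is a vector function $(S,E,I,R)$ of class $C^1(0,\infty)\cap C[0,\infty)$ satisfying these. Standing assumptions: (A1) $\tilde I>0$; (A2) $\tilde E>(\gamma/\delta)\tilde I$; (A3) $\tilde S>\delta\tilde E/(\beta\tilde I)$; (A4) $\tilde R\ge 0$ and $N>\tilde S e^{(\beta/\gamma)\tilde R}+\tilde R$. Let $\alpha$ be the unique solution in $(\tilde R,N)$ of $x=N-\tilde S e^{(\beta/\gamma)\tilde R}e^{-(\beta/\gamma)x}$, and assume (A5) $\tilde S<(\gamma/\beta)e^{(\beta/\gamma)(\alpha-\tilde R)}$. Put $u_0:=e^{-(\beta/\gamma)\tilde R}$, $u_\infty:=e^{-(\beta/\gamma)\alpha}$ (so $0<u_\infty<u_0$). Let $\psi$ be the unique function, continuous and positive on $(u_\infty,u_0]$ and $C^1$ on $(u_\infty,u_0)$, satisfying the Abel equation $\psi'(u)\psi(u)-\frac{\gamma+\delta}{u}\psi(u)=-\delta\,\frac{\beta N-\beta\tilde S e^{(\beta/\gamma)\tilde R}u+\gamma\log u}{u}$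 for $u\in(u_\infty,u_0)$ and $\psi(u_0)=\beta\tilde I$. Let $\varphi(u):=\int_u^{u_0}\frac{d\xi}{\xi\psi(\xi)}$ for $u\in(u_\infty,u_0]$; $\varphi$ is a strictly decreasing continuous bijection from $(u_\infty,u_0]$ onto $[0,\infty)$, of class $C^1$ on $(u_\infty,u_0)$, and $\varphi^{-1}:[0,\infty)\to(u_\infty,u_0]$ denotes its inverse. *)

(* Defs.v *)
From Stdlib Require Import Reals Lra ClassicalEpsilon.
From Coquelicot Require Import Coquelicot.
Open Scope R_scope.

Definition continuous_on_set (D : R -> Prop) (f : R -> R) : Prop :=
  forall x, D x -> forall eps, 0 < eps -> exists delta, 0 < delta /\
    forall y, D y -> Rabs (y - x) < delta -> Rabs (f y - f x) < eps.

Definition C1_on_with (D : R -> Prop) (f f' : R -> R) : Prop :=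
  forall x, D x -> is_derive f x (f' x) /\ continuous f' x.

Definition phi (psi : R -> R) (u0 u : R) : R :=
  RInt (fun xi => / (xi * psi xi)) u u0.

(* phi^{-1}(t): the point u of (uinf, u0] with phi(u) = t (chosen by
   Hilbert's epsilon; it is unique since phi is a bijection). *)
Definition phi_inv (psi : R -> R) (uinf u0 t : R) : R :=
  epsilon (inhabits 0) (fun u => uinf < u <= u0 /\ phi psi u0 u = t).

Definition SEIR_solution (beta gamma delta S0 E0 I0 R0 : R)
    (S E I Rf : R -> R) : Prop :=
  continuous_on_set (fun t => 0 <= t) S /\
  continuous_on_set (fun t => 0 <= t) E /\
  continuous_on_set (fun t => 0 <= t) I /\
  continuous_on_set (fun t => 0 <= t) Rf /\
  (exists S' E' I' R' : R -> R,
     C1_on_with (fun t => 0 < t) S S' /\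
     C1_on_with (fun t => 0 < t) E E' /\
     C1_on_with (fun t => 0 < t) I I' /\
     C1_on_with (fun t => 0 < t) Rf R' /\
     forall t, 0 < t ->
       S' t = - beta * S t * I t /\
       E' t = beta * S t * I t - delta * E t /\
       I' t = delta * E t - gamma * I t /\
       R' t = gamma * I t) /\
  S 0 = S0 /\ E 0 = E0 /\ I 0 = I0 /\ Rf 0 = R0.

(* Main.v *)
Require Import Defs.
From Stdlib Require Import Reals Lra ClassicalEpsilon.
From Coquelicot Require Import Coquelicot.
Open Scope R_scope.

Lemma ball_of_Rabs (x e y : R) : Rabs (y - x) < e -> ball x e y.
Proof. intros H. exact H. Qed.

Lemma locally_of (x : R) (P : R -> Prop) (d : R) : 0 < d ->
  (forall y, Rabs (y - x) < d -> P y) -> locally x P.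
Proof. intros Hd H. exists (mkposreal d Hd). intros y Hy. apply H. exact Hy. Qed.

Lemma cont_eps (f : R -> R) (x : R) :
  (forall eps, 0 < eps -> exists d, 0 < d /\ forall y, Rabs (y - x) < d -> Rabs (f y - f x) < eps) ->
  continuous f x.
Proof.
  intros H. apply continuity_pt_filterlim.
  intros eps Heps. destruct (H eps Heps) as [d [Hd Hd']].
  exists d. split; auto. intros y [_ Hy]. apply Hd'. exact Hy.
Qed.

Lemma eps_cont (f : R -> R) (x : R) : continuous f x ->
  forall eps, 0 < eps -> exists d, 0 < d /\ forall y, Rabs (y - x) < d -> Rabs (f y - f x) < eps.
Proof.
  intros Hc eps Heps. apply continuity_pt_filterlim in Hc.
  destruct (Hc eps Heps) as [d [Hd Hd']].
  exists d. split; auto. intros y Hy.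
  destruct (Req_dec y x) as [->|Hne].
  - unfold Rminus. rewrite Rplus_opp_r, Rabs_R0. exact Heps.
  - apply Hd'. split. split. exact I. auto. exact Hy.
Qed.

Lemma cont_lip (f : R -> R) (x : R) :
  (forall y, Rabs (f y - f x) <= Rabs (y - x)) -> continuous f x.
Proof.
  intros H. apply cont_eps. intros eps Heps. exists eps. split; auto.
  intros y Hy. specialize (H y). lra.
Qed.

Lemma cos_of_cont (f fe : R -> R) :
  (forall t, 0 <= t -> continuous fe t) -> (forall t, 0 <= t -> fe t = f t) ->
  continuous_on_set (fun t => 0 <= t) f.
Proof.
  intros Hc He x Hx eps Heps.
  destruct (eps_cont fe x (Hc x Hx) eps Heps) as [d [Hd H']].
  exists d. split; auto. intros y Hy Hyx.
  rewrite <- (He y Hy), <- (He x Hx). apply H'. exact Hyx.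
Qed.

Lemma is_derive_val (f : R -> R) (x l l' : R) : is_derive f x l -> l = l' -> is_derive f x l'.
Proof. intros H ->. exact H. Qed.

Lemma Rmin_lip (c z x : R) : Rabs (Rmin z c - Rmin x c) <= Rabs (z - x).
Proof. unfold Rmin. destruct (Rle_dec z c), (Rle_dec x c); unfold Rabs; repeat destruct Rcase_abs; lra. Qed.

Lemma Rmax_lip (c z x : R) : Rabs (Rmax z c - Rmax x c) <= Rabs (z - x).
Proof. unfold Rmax. destruct (Rle_dec z c), (Rle_dec x c); unfold Rabs; repeat destruct Rcase_abs; lra. Qed.

Lemma ln_le_sub1 (y : R) : 0 < y -> ln y <= y - 1.
Proof.
  intros Hy. pose proof (exp_ineq1_le (ln y)). rewrite exp_ln in H; lra.
Qed.
Lemma inv_derive (f g : R -> R) (y d : R) :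
  (forall eps, 0 < eps -> exists del, 0 < del /\ forall s, Rabs (s - y) < del -> Rabs (g s - g y) < eps) ->
  (exists r, 0 < r /\ forall s, Rabs (s - y) < r -> f (g s) = s) ->
  is_derive f (g y) d -> d <> 0 -> is_derive g y (/ d).
Proof.
  intros Hg [r [Hr Hfg]] Hf Hd.
  apply is_derive_Reals. apply is_derive_Reals in Hf.
  intros eps Heps.
  assert (Hd2 : 0 < Rabs d) by (apply Rabs_pos_lt; auto).
  set (e' := Rmin (Rabs d / 2) (eps * (Rabs d * Rabs d) / 2)).
  assert (He' : 0 < e').
  { unfold e'. apply Rmin_pos. lra. apply Rmult_lt_0_compat; [|lra]. apply Rmult_lt_0_compat; auto. apply Rmult_lt_0_compat; auto. }
  destruct (Hf e' He') as [d' Hd'].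
  destruct (Hg d' (cond_pos d')) as [d1 [Hd1 Hd1']].
  assert (Hmin : 0 < Rmin d1 r) by (apply Rmin_pos; auto).
  exists (mkposreal _ Hmin). intros hh Hh0 Hh. simpl in Hh.
  assert (Hh1 : Rabs (y + hh - y) < d1). { replace (y + hh - y) with hh by ring. eapply Rlt_le_trans; [exact Hh| apply Rmin_l]. }
  assert (Hh2 : Rabs (y + hh - y) < r). { replace (y + hh - y) with hh by ring. eapply Rlt_le_trans; [exact Hh| apply Rmin_r]. }
  assert (Hy0 : Rabs (y - y) < r) by (rewrite Rminus_diag, Rabs_R0; auto).
  set (k := g (y + hh) - g y).
  assert (Hk : k <> 0).
  { intros Hk. unfold k in Hk. assert (g (y + hh) = g y) by lra.
    pose proof (Hfg _ Hh2). pose proof (Hfg _ Hy0). rewrite H in H0. lra. }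
  assert (Hkd : Rabs k < d') by (apply Hd1'; exact Hh1).
  specialize (Hd' k Hk Hkd).
  assert (Hq : f (g y + k) - f (g y) = hh).
  { unfold k. replace (g y + (g (y + hh) - g y)) with (g (y + hh)) by ring.
    rewrite (Hfg _ Hh2), (Hfg _ Hy0). ring. }
  rewrite Hq in Hd'.
  fold k.
  set (q := hh / k) in *.
  assert (Hq1 : Rabs (q - d) < Rabs d / 2) by (eapply Rlt_le_trans; [exact Hd'|apply Rmin_l]).
  assert (Hq2 : Rabs (q - d) < eps * (Rabs d * Rabs d) / 2) by (eapply Rlt_le_trans; [exact Hd'|apply Rmin_r]).
  assert (Hqa : Rabs d / 2 < Rabs q).
  { pose proof (Rabs_triang_inv d q). rewrite <- Rabs_Ropp in Hq1. replace (- (q - d)) with (d - q) in Hq1 by ring. lra. }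
  assert (Hq0 : q <> 0). { intros H0. rewrite H0, Rabs_R0 in Hqa. lra. }
  replace (k / hh - / d) with ((d - q) / (q * d)).
  2:{ unfold q. field. auto. }
  unfold Rdiv. rewrite Rabs_mult, Rabs_inv, Rabs_mult.
  rewrite <- Rabs_Ropp. replace (- (d - q)) with (q - d) by ring.
  apply (Rmult_lt_reg_r (Rabs q * Rabs d)).
  { apply Rmult_lt_0_compat; lra. }
  rewrite Rmult_assoc, Rinv_l. 2:{ apply Rgt_not_eq. apply Rmult_lt_0_compat; lra. }
  rewrite Rmult_1_r.
  apply Rlt_le_trans with (eps * (Rabs d * Rabs d) / 2); auto.
  apply Rle_trans with (eps * (Rabs d / 2 * Rabs d)). lra.
  apply Rmult_le_compat_l. lra. apply Rmult_le_compat_r; lra.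
Qed.

Lemma cmult (f g : R -> R) x : continuous f x -> continuous g x -> continuous (fun y => f y * g y) x.
Proof. intros. exact (continuous_mult f g x H H0). Qed.
Lemma cplus (f g : R -> R) x : continuous f x -> continuous g x -> continuous (fun y => f y + g y) x.
Proof. intros. exact (continuous_plus f g x H H0). Qed.
Lemma cminus (f g : R -> R) x : continuous f x -> continuous g x -> continuous (fun y => f y - g y) x.
Proof. intros. exact (continuous_minus f g x H H0). Qed.
Lemma cconst (c : R) x : continuous (fun _ : R => c) x.
Proof. exact (continuous_const c x). Qed.
Lemma cid x : continuous (fun y : R => y) x.
Proof. exact (continuous_id x). Qed.

Lemma der_cont (f : R -> R) x l : is_derive f x l -> continuous f x.
Proof. intros H. apply (ex_derive_continuous (K:=R_AbsRing) (V:=R_NormedModule)). exists l. exact H. Qed.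

Lemma dmult (f g : R -> R) x df dg : is_derive f x df -> is_derive g x dg ->
  is_derive (fun y => f y * g y) x (df * g x + f x * dg).
Proof. intros. exact (is_derive_mult f g x df dg H H0 Rmult_comm). Qed.
Lemma dplus (f g : R -> R) x df dg : is_derive f x df -> is_derive g x dg ->
  is_derive (fun y => f y + g y) x (df + dg).
Proof. intros. exact (is_derive_plus f g x df dg H H0). Qed.
Lemma dminus (f g : R -> R) x df dg : is_derive f x df -> is_derive g x dg ->
  is_derive (fun y => f y - g y) x (df - dg).
Proof. intros. exact (is_derive_minus f g x df dg H H0). Qed.
Lemma dcomp (f g : R -> R) x df dg : is_derive f (g x) df -> is_derive g x dg ->
  is_derive (fun y => f (g y)) x (dg * df).
Proof. intros. exact (is_derive_comp f g x df dg H H0). Qed.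
Lemma dconst (c : R) x : is_derive (fun _ : R => c) x 0.
Proof. exact (is_derive_const c x). Qed.
Lemma ccomp (f g : R -> R) x : continuous g x -> continuous f (g x) -> continuous (fun y => f (g y)) x.
Proof. intros. exact (continuous_comp g f x H H0). Qed.

Section Main.
Variables (beta gamma delta St Et It Rt alpha : R) (psi psi' : R -> R).
Hypotheses (Hbeta : 0 < beta) (Hgamma : 0 < gamma) (Hdelta : 0 < delta)
  (HN : 0 < St + Et + It + Rt)
  (A1 : 0 < It)
  (A2 : Et > (gamma / delta) * It)
  (A3 : St > delta * Et / (beta * It))
  (A4a : 0 <= Rt)
  (A4b : St + Et + It + Rt > St * exp ((beta / gamma) * Rt) + Rt)
  (Halpha_int : Rt < alpha < St + Et + It + Rt)
  (Halpha_eq : alpha = (St + Et + It + Rt)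
      - St * exp ((beta / gamma) * Rt) * exp (- (beta / gamma) * alpha))
  (A5 : St < (gamma / beta) * exp ((beta / gamma) * (alpha - Rt)))
  (Hpsi_cont : continuous_on_set
      (fun u => exp (- (beta / gamma) * alpha) < u <= exp (- (beta / gamma) * Rt)) psi)
  (Hpsi_pos : forall u,
      exp (- (beta / gamma) * alpha) < u <= exp (- (beta / gamma) * Rt) -> 0 < psi u)
  (Hpsi_C1 : C1_on_with
      (fun u => exp (- (beta / gamma) * alpha) < u < exp (- (beta / gamma) * Rt)) psi psi')
  (Hpsi_abel : forall u,
      exp (- (beta / gamma) * alpha) < u < exp (- (beta / gamma) * Rt) ->
      psi' u * psi u - (gamma + delta) / u * psi u =
      - delta * (beta * (St + Et + It + Rt)
                 - beta * St * exp ((beta / gamma) * Rt) * u + gamma * ln u) / u)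
  (Hpsi_init : psi (exp (- (beta / gamma) * Rt)) = beta * It).

Definition su0 := exp (- (beta / gamma) * Rt).
Definition suinf := exp (- (beta / gamma) * alpha).
Definition sN := St + Et + It + Rt.
Definition sK := St * exp ((beta / gamma) * Rt).
Definition sm x := Rmin x su0.
Definition sps x := psi (sm x).
Definition sh x := / (sm x * sps x).
Definition sPhi x := RInt sh x su0.
Definition sF u := beta * sN - beta * sK * u + gamma * ln u.
Definition sG v := exp (delta * sPhi v).
Definition sQ x := RInt sG x su0.

Lemma ab_pos : 0 < beta / gamma.
Proof. apply Rdiv_lt_0_compat; auto. Qed.

Lemma uinf_lt_u0 : suinf < su0.
Proof. unfold suinf, su0. apply exp_increasing. pose proof ab_pos. nra. Qed.

Lemma uinf_pos : 0 < suinf.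
Proof. apply exp_pos. Qed.

Lemma Et_pos : 0 < Et.
Proof. assert (0 < gamma / delta * It). { apply Rmult_lt_0_compat; auto. apply Rdiv_lt_0_compat; auto. } lra. Qed.

Lemma St_pos : 0 < St.
Proof. pose proof Et_pos. assert (0 < delta * Et / (beta * It)).
  { apply Rdiv_lt_0_compat. nra. nra. } lra. Qed.

Lemma K_pos : 0 < sK.
Proof. unfold sK. pose proof St_pos. pose proof (exp_pos ((beta / gamma) * Rt)). nra. Qed.

Lemma K_u0 : sK * su0 = St.
Proof. unfold sK, su0. rewrite Rmult_assoc, <- exp_plus.
  replace (beta / gamma * Rt + - (beta / gamma) * Rt) with 0 by ring. rewrite exp_0. ring. Qed.

Lemma ln_u0 : ln su0 = - (beta / gamma) * Rt.
Proof. unfold su0. rewrite ln_exp. auto. Qed.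

Lemma ln_uinf : ln suinf = - (beta / gamma) * alpha.
Proof. unfold suinf. rewrite ln_exp. auto. Qed.

Lemma F_uinf : sF suinf = 0.
Proof.
  unfold sF. rewrite ln_uinf. unfold sN, sK, suinf.
  rewrite Halpha_eq at 2. field. lra.
Qed.

Lemma F_u0 : sF su0 - beta * It = beta * Et.
Proof.
  unfold sF. rewrite ln_u0. rewrite Rmult_assoc, K_u0. unfold sN. field. lra.
Qed.

Lemma m_in x : suinf < x -> suinf < sm x <= su0.
Proof. intros H. pose proof uinf_lt_u0. unfold sm, Rmin. destruct (Rle_dec x su0); lra. Qed.

Lemma m_id x : x <= su0 -> sm x = x.
Proof. intros H. unfold sm, Rmin. destruct (Rle_dec x su0); lra. Qed.

Lemma ps_pos x : suinf < x -> 0 < sps x.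
Proof. intros H. apply Hpsi_pos. apply m_in; auto. Qed.

Lemma m_cont x : continuous sm x.
Proof. apply cont_lip. intros y. apply Rmin_lip. Qed.

Lemma ps_cont x : suinf < x -> continuous sps x.
Proof.
  intros Hx. apply cont_eps. intros eps Heps.
  destruct (Hpsi_cont (sm x) (m_in x Hx) eps Heps) as [d [Hd H']].
  exists (Rmin d (x - suinf)). split. apply Rmin_pos; lra.
  intros y Hy.
  assert (Hy1 : Rabs (y - x) < d) by (eapply Rlt_le_trans; [exact Hy|apply Rmin_l]).
  assert (Hy2 : Rabs (y - x) < x - suinf) by (eapply Rlt_le_trans; [exact Hy|apply Rmin_r]).
  assert (Hyi : suinf < y) by (apply Rabs_def2 in Hy2; lra).
  unfold sps. apply H'. apply m_in; auto.
  eapply Rle_lt_trans. apply Rmin_lip. auto.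
Qed.

Lemma h_cont x : suinf < x -> continuous sh x.
Proof.
  intros Hx. unfold sh. apply continuous_Rinv_comp.
  apply cmult. apply m_cont. apply ps_cont; auto.
  pose proof (m_in x Hx). pose proof (ps_pos x Hx). pose proof uinf_pos.
  apply Rgt_not_eq. apply Rmult_lt_0_compat; lra.
Qed.

Lemma h_pos x : suinf < x -> 0 < sh x.
Proof.
  intros Hx. unfold sh. pose proof (m_in x Hx). pose proof (ps_pos x Hx). pose proof uinf_pos.
  apply Rinv_0_lt_compat. apply Rmult_lt_0_compat; lra.
Qed.

Lemma exRInt_gt (f : R -> R) a b : (forall z, suinf < z -> continuous f z) ->
  suinf < a -> suinf < b -> ex_RInt f a b.
Proof.
  intros Hf Ha Hb. apply (ex_RInt_continuous (V:=R_CompleteNormedModule)). intros z Hz. apply Hf.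
  unfold Rmin in Hz. destruct (Rle_dec a b); lra.
Qed.

Lemma RInt_lower_derive (f : R -> R) x : (forall z, suinf < z -> continuous f z) ->
  suinf < x -> is_derive (fun a => RInt f a su0) x (- f x).
Proof.
  intros Hf Hx. pose proof uinf_lt_u0.
  apply (is_derive_RInt' f (fun a => RInt f a su0) x su0).
  - apply (locally_of x _ (x - suinf)). lra.
    intros y Hy. apply (RInt_correct (V:=R_CompleteNormedModule)). apply exRInt_gt; auto.
    apply Rabs_def2 in Hy; lra.
  - apply Hf; auto.
Qed.

Lemma Phi_derive x : suinf < x -> is_derive sPhi x (- sh x).
Proof. intros Hx. apply RInt_lower_derive; auto. apply h_cont. Qed.

Lemma Phi_cont x : suinf < x -> continuous sPhi x.
Proof. intros Hx. eapply der_cont. apply Phi_derive; auto. Qed.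

Lemma Phi_u0 : sPhi su0 = 0.
Proof. unfold sPhi. rewrite RInt_point. reflexivity. Qed.

Lemma Phi_decr x y : suinf < x -> x < y -> sPhi y < sPhi x.
Proof.
  intros Hx Hxy.
  destruct (MVT_gen sPhi x y (fun z => - sh z)) as [c [Hc Heq]].
  - intros z Hz. rewrite Rmin_left in Hz by lra. apply Phi_derive. lra.
  - intros z Hz. rewrite Rmin_left in Hz by lra. apply continuity_pt_filterlim. apply Phi_cont. lra.
  - rewrite Rmin_left in Hc by lra. rewrite Rmax_right in Hc by lra.
    pose proof (h_pos c ltac:(lra)). nra.
Qed.

Lemma Phi_eq_phi u : suinf < u <= su0 -> phi psi su0 u = sPhi u.
Proof.
  intros Hu. unfold phi, sPhi. apply RInt_ext. intros x Hx.
  rewrite Rmin_left in Hx by lra. rewrite Rmax_right in Hx by lra.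
  unfold sh, sps. rewrite m_id by lra. reflexivity.
Qed.

Lemma G_cont x : suinf < x -> continuous sG x.
Proof. intros Hx. unfold sG. apply continuous_exp_comp. apply cmult. apply cconst. apply Phi_cont; auto. Qed.

Lemma Q_derive x : suinf < x -> is_derive sQ x (- sG x).
Proof. intros Hx. apply RInt_lower_derive; auto. apply G_cont. Qed.

Lemma Q_cont x : suinf < x -> continuous sQ x.
Proof. intros Hx. eapply der_cont. apply Q_derive; auto. Qed.


Lemma F_derive x : 0 < x -> is_derive sF x (- beta * sK + gamma / x).
Proof. intros Hx. unfold sF. auto_derive. lra. field. lra. Qed.

Lemma F_cont x : 0 < x -> continuous sF x.
Proof. intros Hx. eapply der_cont. apply F_derive; auto. Qed.

Definition sP x := (sF (sm x) - sps x) / beta * exp (delta * sPhi x) - sK * sQ x.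
Definition sP0 x := (sF x - psi x) / beta * exp (delta * sPhi x) - sK * sQ x.

Lemma P_cont x : suinf < x -> continuous sP x.
Proof.
  intros Hx. pose proof (m_in x Hx). pose proof uinf_pos. unfold sP.
  apply cminus. apply cmult. apply cmult. apply cminus.
  apply ccomp. apply m_cont. apply F_cont. lra.
  apply ps_cont; auto. apply cconst.
  apply ccomp. apply cmult. apply cconst. apply Phi_cont; auto. apply continuous_exp.
  apply cmult. apply cconst. apply Q_cont; auto.
Qed.

Lemma P0_derive x : suinf < x < su0 -> is_derive sP0 x 0.
Proof.
  intros Hx. pose proof uinf_pos.
  assert (Hx' : exp (- (beta / gamma) * alpha) < x < exp (- (beta / gamma) * Rt)) by exact Hx.
  destruct (Hpsi_C1 x Hx') as [Hd _].
  pose proof (Hpsi_abel x Hx') as Hab.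
  pose proof (Hpsi_pos x (conj (proj1 Hx') (Rlt_le _ _ (proj2 Hx')))) as Hp.
  unfold sP0.
  eapply is_derive_val.
  { apply dminus. apply dmult. apply dmult. apply dminus. apply F_derive. lra. exact Hd.
    apply dconst. apply dcomp. apply is_derive_exp. apply is_derive_scal. apply Phi_derive. lra.
    apply is_derive_scal. apply Q_derive. lra. }
  unfold sG, sh, sps. rewrite m_id by lra.
  assert (Hpp : psi' x = ((gamma + delta) / x * psi x + - delta * (beta * (St + Et + It + Rt) - beta * St * exp (beta / gamma * Rt) * x + gamma * ln x) / x) / psi x).
  { apply (Rmult_eq_reg_r (psi x)). 2: lra.
    match goal with |- _ = ?A / _ * _ => replace (A / psi x * psi x) with A by (field; lra) end. lra. }
  rewrite Hpp. unfold sF, sN, sK. match goal with |- ?a = ?b => change (@eq R a b) end. field. lra.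
Qed.

Lemma key_u u : suinf < u <= su0 -> sP u = Et.
Proof.
  intros Hu.
  assert (HPu0 : sP su0 = Et).
  { unfold sP. rewrite m_id by lra. unfold sps. rewrite m_id by lra. rewrite Phi_u0.
    unfold sQ. rewrite RInt_point. change (zero : R) with 0.
    unfold su0 at 2. rewrite Hpsi_init. fold su0. rewrite Rmult_0_r, exp_0.
    rewrite F_u0. field. lra. }
  destruct (Req_dec u su0) as [->|Hne]. exact HPu0.
  destruct (MVT_gen sP u su0 (fun _ => 0)) as [c [Hc Heq]].
  - intros z Hz. rewrite Rmin_left in Hz by lra. rewrite Rmax_right in Hz by lra.
    apply (is_derive_ext_loc sP0 sP). 2: apply P0_derive; lra.
    apply (locally_of z _ (su0 - z)). lra. intros y Hy. apply Rabs_def2 in Hy.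
    unfold sP, sP0, sps. rewrite m_id by lra. reflexivity.
  - intros z Hz. rewrite Rmin_left in Hz by lra. apply continuity_pt_filterlim. apply P_cont. lra.
  - lra.
Qed.

Lemma key u : suinf < u <= su0 -> (sF u - psi u) / beta * exp (delta * sPhi u) = Et + sK * sQ u.
Proof.
  intros Hu. pose proof (key_u u Hu) as H. unfold sP, sps in H. rewrite m_id in H by lra. lra.
Qed.

Lemma Q_nonneg u : suinf < u <= su0 -> 0 <= sQ u.
Proof.
  intros Hu. unfold sQ. apply RInt_ge_0. lra. apply exRInt_gt. apply G_cont. lra. pose proof uinf_lt_u0; lra.
  intros x _. unfold sG. left. apply exp_pos.
Qed.

Lemma psi_lt_F u : suinf < u <= su0 -> psi u < sF u.
Proof.
  intros Hu. pose proof (key u Hu). pose proof (Q_nonneg u Hu). pose proof K_pos. pose proof Et_pos.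
  pose proof (exp_pos (delta * sPhi u)).
  assert (0 < (sF u - psi u) / beta * exp (delta * sPhi u)) by nra.
  assert (0 < (sF u - psi u) / beta) by nra.
  assert (0 < sF u - psi u). { apply (Rmult_lt_reg_r (/ beta)). apply Rinv_0_lt_compat; lra. lra. }
  lra.
Qed.

Definition sc := gamma / suinf - beta * sK.

Lemma F_le u : 0 < u -> sF u <= sc * (u - suinf).
Proof.
  intros Hu. pose proof uinf_pos.
  assert (E1 : sF u = sF u - sF suinf) by (rewrite F_uinf; ring).
  assert (E2 : sF u - sF suinf = - beta * sK * (u - suinf) + gamma * ln (u / suinf)).
  { rewrite ln_div by lra. unfold sF. ring. }
  pose proof (ln_le_sub1 (u / suinf) ltac:(apply Rdiv_lt_0_compat; lra)).
  rewrite E1, E2. unfold sc.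
  assert (gamma * ln (u / suinf) <= gamma * (u / suinf - 1)) by (apply Rmult_le_compat_l; lra).
  replace (gamma * (u / suinf - 1)) with (gamma / suinf * (u - suinf)) in H1 by (field; lra).
  lra.
Qed.

Lemma c_pos : 0 < sc.
Proof.
  pose proof uinf_lt_u0. pose proof uinf_pos.
  assert (Hu : suinf < su0 <= su0) by lra.
  pose proof (psi_lt_F su0 Hu). pose proof (Hpsi_pos su0 Hu). pose proof (F_le su0 ltac:(lra)).
  nra.
Qed.

Lemma Phi_lower u : suinf < u <= su0 ->
  (ln (su0 - suinf) - ln (u - suinf)) / (su0 * sc) <= sPhi u.
Proof.
  intros Hu. pose proof uinf_lt_u0. pose proof uinf_pos. pose proof c_pos.
  set (g := fun x => / (su0 * sc * (x - suinf))).
  set (Lg := fun x => ln (x - suinf) / (su0 * sc)).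
  assert (HL : forall x, suinf < x -> is_derive Lg x (g x)).
  { intros x Hx. unfold Lg, g. auto_derive. lra. field. repeat split; lra. }
  assert (Hgc : forall x, suinf < x -> continuous g x).
  { intros x Hx. unfold g. apply continuous_Rinv_comp. apply cmult. apply cconst. apply cminus. apply cid. apply cconst.
    apply Rgt_not_eq. apply Rmult_lt_0_compat. apply Rmult_lt_0_compat; lra. lra. }
  assert (HI : is_RInt g u su0 (minus (Lg su0) (Lg u))).
  { apply (is_RInt_derive (V:=R_CompleteNormedModule)).
    - intros x Hx. rewrite Rmin_left in Hx by lra. apply HL. lra.
    - intros x Hx. rewrite Rmin_left in Hx by lra. apply Hgc. lra. }
  replace ((ln (su0 - suinf) - ln (u - suinf)) / (su0 * sc)) with (RInt g u su0).
  2:{ rewrite (is_RInt_unique _ _ _ _ HI). unfold Lg, minus, plus, opp. simpl. field. lra. }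
  unfold sPhi. apply RInt_le. lra.
  apply exRInt_gt; auto; lra.
  apply exRInt_gt. apply h_cont. lra. lra.
  intros x Hx. unfold g, sh, sps. rewrite m_id by lra.
  assert (Hxd : suinf < x <= su0) by lra.
  pose proof (psi_lt_F x Hxd). pose proof (Hpsi_pos x Hxd). pose proof (F_le x ltac:(lra)).
  apply Rinv_le_contravar. apply Rmult_lt_0_compat; lra.
  assert (x * psi x <= su0 * psi x) by (apply Rmult_le_compat_r; lra).
  assert (su0 * psi x <= su0 * (sc * (x - suinf))) by (apply Rmult_le_compat_l; lra).
  lra.
Qed.

Lemma Phi_large t : 0 <= t -> exists u, suinf < u < su0 /\ t < sPhi u.
Proof.
  intros Ht. pose proof uinf_lt_u0. pose proof uinf_pos. pose proof c_pos.
  set (e := exp (- (t + 1) * (su0 * sc))).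
  assert (He : 0 < e < 1).
  { unfold e. split. apply exp_pos.
    assert (0 < su0 * sc) by (apply Rmult_lt_0_compat; lra).
    assert (H9 : - (t + 1) * (su0 * sc) < 0) by nra.
    pose proof (exp_increasing _ _ H9) as H8. rewrite exp_0 in H8. exact H8. }
  exists (suinf + (su0 - suinf) * e). split. split; nra.
  assert (Hu : suinf < suinf + (su0 - suinf) * e <= su0) by (split; nra).
  pose proof (Phi_lower _ Hu).
  replace (suinf + (su0 - suinf) * e - suinf) with ((su0 - suinf) * e) in H2 by ring.
  rewrite ln_mult in H2 by lra. unfold e in H2. rewrite ln_exp in H2.
  replace ((ln (su0 - suinf) - (ln (su0 - suinf) + - (t + 1) * (su0 * sc))) / (su0 * sc)) with (t + 1) in H2.
  unfold e in *. lra. field. split; lra.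
Qed.

Lemma Phi_surj t : 0 <= t -> exists w, suinf < w <= su0 /\ sPhi w = t.
Proof.
  intros Ht. pose proof uinf_lt_u0.
  destruct (Req_dec t 0) as [->|Hne]. { exists su0. split. lra. apply Phi_u0. }
  destruct (Phi_large t Ht) as [u [Hu Htu]].
  set (f := fun x => sPhi (Rmax x u)).
  assert (Hf : continuity f).
  { intros x. apply continuity_pt_filterlim. unfold f. apply (ccomp sPhi (fun y => Rmax y u)).
    apply cont_lip. intros y. apply Rmax_lip. apply Phi_cont. pose proof (Rmax_r x u). lra. }
  destruct (IVT_gen f u su0 t Hf) as [x [Hx Hfx]].
  { unfold f. rewrite (Rmax_left su0 u) by lra. rewrite Rmax_left by lra. rewrite Phi_u0.
    rewrite Rmin_right by lra. rewrite Rmax_left by lra. lra. }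
  rewrite Rmin_left in Hx by lra. rewrite Rmax_right in Hx by lra.
  exists x. split. lra. unfold f in Hfx. rewrite Rmax_left in Hfx by lra. exact Hfx.
Qed.

Definition sfinv t := phi_inv psi suinf su0 t.

Lemma finv_spec t : 0 <= t -> suinf < sfinv t <= su0 /\ sPhi (sfinv t) = t.
Proof.
  intros Ht. unfold sfinv, phi_inv.
  match goal with |- context [epsilon ?i ?P] => assert (HP : P (epsilon i P)) end.
  { apply epsilon_spec. destruct (Phi_surj t Ht) as [w [Hw Hw']]. exists w. split; auto.
    rewrite Phi_eq_phi; auto. }
  destruct HP as [HP1 HP2]. split; auto. rewrite <- Phi_eq_phi; auto.
Qed.

Lemma Phi_inj x y : suinf < x -> suinf < y -> sPhi x = sPhi y -> x = y.
Proof.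
  intros Hx Hy He. destruct (Rtotal_order x y) as [H|[H|H]]; auto.
  pose proof (Phi_decr x y Hx H). lra. pose proof (Phi_decr y x Hy H). lra.
Qed.

Lemma finv_0 : sfinv 0 = su0.
Proof.
  destruct (finv_spec 0 (Rle_refl 0)) as [H1 H2]. pose proof uinf_lt_u0.
  apply Phi_inj; try lra. rewrite H2, Phi_u0. auto.
Qed.

Lemma finv_lt t : 0 < t -> sfinv t < su0.
Proof.
  intros Ht. destruct (finv_spec t (Rlt_le _ _ Ht)) as [H1 H2].
  destruct H1 as [H1 [H3|H3]]; auto. rewrite H3, Phi_u0 in H2. lra.
Qed.

Lemma finv_rcont t : 0 <= t -> forall eps, 0 < eps -> exists d, 0 < d /\ forall s, 0 <= s -> Rabs (s - t) < d -> Rabs (sfinv s - sfinv t) < eps.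
Proof.
  intros Ht eps Heps. destruct (finv_spec t Ht) as [[Hu1 Hu2] Hut].
  set (u := sfinv t) in *.
  set (e1 := Rmin (eps / 2) ((u - suinf) / 2)).
  assert (He1 : 0 < e1) by (apply Rmin_pos; lra).
  assert (He1a : e1 <= eps / 2) by apply Rmin_l.
  assert (He1b : e1 <= (u - suinf) / 2) by apply Rmin_r.
  set (a := u - e1).
  assert (Ha : suinf < a) by (unfold a; lra).
  assert (HPa : t < sPhi a) by (rewrite <- Hut; apply Phi_decr; unfold a; lra).
  destruct Hu2 as [Hlt|Heq].
  - set (b := Rmin (u + e1) su0).
    assert (Hb1 : u < b) by (unfold b; apply Rmin_glb_lt; lra).
    assert (Hb2 : b <= u + e1) by apply Rmin_l.
    assert (Hb3 : b <= su0) by apply Rmin_r.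
    assert (HPb : sPhi b < t) by (rewrite <- Hut; apply Phi_decr; lra).
    exists (Rmin (sPhi a - t) (t - sPhi b)). split. apply Rmin_pos; lra.
    intros s Hs Hst.
    assert (Hs1 : Rabs (s - t) < sPhi a - t) by (eapply Rlt_le_trans; [exact Hst|apply Rmin_l]).
    assert (Hs2 : Rabs (s - t) < t - sPhi b) by (eapply Rlt_le_trans; [exact Hst|apply Rmin_r]).
    apply Rabs_def2 in Hs1. apply Rabs_def2 in Hs2.
    destruct (finv_spec s Hs) as [[Hv1 Hv2] Hvs].
    assert (a < sfinv s).
    { destruct (Rlt_or_le a (sfinv s)) as [H|H]; auto. destruct H as [H|H].
      pose proof (Phi_decr _ _ Hv1 H). lra. rewrite H in Hvs. lra. }
    assert (sfinv s < b).
    { destruct (Rlt_or_le (sfinv s) b) as [H'|H']; auto. destruct H' as [H'|H'].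
      pose proof (Phi_decr _ _ (Rlt_trans _ _ _ Hu1 Hb1) H'). lra. rewrite <- H' in Hvs. lra. }
    apply Rabs_def1; unfold a in *; lra.
  - exists (sPhi a - t). split. lra.
    intros s Hs Hst. apply Rabs_def2 in Hst.
    destruct (finv_spec s Hs) as [[Hv1 Hv2] Hvs].
    assert (a < sfinv s).
    { destruct (Rlt_or_le a (sfinv s)) as [H|H]; auto. destruct H as [H|H].
      pose proof (Phi_decr _ _ Hv1 H). lra. rewrite H in Hvs. lra. }
    apply Rabs_def1; unfold a in *; lra.
Qed.

Definition sfe t := sfinv (Rmax t 0).

Lemma fe_cont t : continuous sfe t.
Proof.
  apply cont_eps. intros eps Heps.
  destruct (finv_rcont (Rmax t 0) (Rmax_r t 0) eps Heps) as [d [Hd H']].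
  exists d. split; auto. intros y Hy. unfold sfe. apply H'. apply Rmax_r.
  eapply Rle_lt_trans. apply Rmax_lip. auto.
Qed.

Lemma fe_pos t : 0 <= t -> sfe t = sfinv t.
Proof. intros Ht. unfold sfe. rewrite Rmax_left by lra. auto. Qed.

Lemma fe_derive t : 0 < t -> is_derive sfe t (- sfe t * psi (sfe t)).
Proof.
  intros Ht. rewrite fe_pos by lra.
  destruct (finv_spec t (Rlt_le _ _ Ht)) as [[Hu1 Hu2] Hut].
  pose proof (finv_lt t Ht).
  eapply is_derive_val.
  apply (inv_derive sPhi sfe t (- sh (sfe t))).
  - apply eps_cont. apply fe_cont.
  - exists t. split; auto. intros s Hs. apply Rabs_def2 in Hs. rewrite fe_pos by lra.
    apply finv_spec; lra.
  - apply Phi_derive. rewrite fe_pos; lra.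
  - pose proof (h_pos (sfe t)). rewrite fe_pos in H0 by lra. rewrite fe_pos by lra.
    specialize (H0 Hu1). lra.
  - rewrite fe_pos by lra. unfold sh, sps. rewrite m_id by lra.
    pose proof (Hpsi_pos (sfinv t) (conj Hu1 Hu2)). pose proof uinf_pos.
    match goal with |- ?a = ?b => change (@eq R a b) end. field. split; lra.
Qed.

Definition Se t := sK * sfe t.
Definition Ee t := Et * exp (- delta * t) + sK * exp (- delta * t) * sQ (sfe t).
Definition Ie t := sN - sK * sfe t + (gamma / beta) * ln (sfe t) - Et * exp (- delta * t)
             - sK * exp (- delta * t) * sQ (sfe t).
Definition Re t := - (gamma / beta) * ln (sfe t).

Lemma fe_range t : suinf < sfe t <= su0.
Proof. unfold sfe. apply finv_spec. apply Rmax_r. Qed.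

Lemma Phi_fe t : 0 <= t -> sPhi (sfe t) = t.
Proof. intros Ht. rewrite fe_pos by auto. apply finv_spec; auto. Qed.

Lemma exp_inv_mul t : exp (- delta * t) * exp (delta * t) = 1.
Proof. rewrite <- exp_plus. replace (- delta * t + delta * t) with 0 by ring. apply exp_0. Qed.

Lemma Ie_val t : 0 <= t -> Ie t = psi (sfe t) / beta.
Proof.
  intros Ht. pose proof (key (sfe t) (fe_range t)) as Hk. rewrite Phi_fe in Hk by auto.
  pose proof (exp_inv_mul t) as He.
  unfold Ie.
  replace (sN - sK * sfe t + gamma / beta * ln (sfe t) - Et * exp (- delta * t) -
    sK * exp (- delta * t) * sQ (sfe t)) with
    (sN - sK * sfe t + gamma / beta * ln (sfe t) - exp (- delta * t) * (Et + sK * sQ (sfe t))) by ring.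
  rewrite <- Hk.
  replace (exp (- delta * t) * ((sF (sfe t) - psi (sfe t)) / beta * exp (delta * t)))
    with ((sF (sfe t) - psi (sfe t)) / beta * (exp (- delta * t) * exp (delta * t))) by ring.
  rewrite He. unfold sF. field. lra.
Qed.

Lemma expd_derive t : is_derive (fun y => exp (- delta * y)) t (- delta * exp (- delta * t)).
Proof. auto_derive. auto. ring. Qed.

Lemma expd_cont t : continuous (fun y => exp (- delta * y)) t.
Proof. eapply der_cont. apply expd_derive. Qed.

Lemma Se_derive t : 0 < t -> is_derive Se t (- beta * Se t * Ie t).
Proof.
  intros Ht. eapply is_derive_val. unfold Se. apply is_derive_scal. apply fe_derive; auto.
  rewrite Ie_val by lra. unfold Se. field. lra.
Qed.

Lemma Re_derive t : 0 < t -> is_derive Re t (gamma * Ie t).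
Proof.
  intros Ht. pose proof (fe_range t). pose proof uinf_pos.
  eapply is_derive_val. unfold Re. apply is_derive_scal.
  apply (dcomp ln sfe). apply is_derive_ln. lra. apply fe_derive; auto.
  rewrite Ie_val by lra. field. split; lra.
Qed.

Lemma Qfe_derive t : 0 < t -> is_derive (fun y => sQ (sfe y)) t (sfe t * psi (sfe t) * exp (delta * t)).
Proof.
  intros Ht. pose proof (fe_range t).
  eapply is_derive_val. apply (dcomp sQ sfe). apply Q_derive. lra. apply fe_derive; auto.
  unfold sG. rewrite Phi_fe by lra. ring.
Qed.

Lemma Ee_derive t : 0 < t -> is_derive Ee t (beta * Se t * Ie t - delta * Ee t).
Proof.
  intros Ht. pose proof (exp_inv_mul t).
  eapply is_derive_val. unfold Ee.
  apply (dplus (fun y => Et * exp (- delta * y)) (fun y => sK * exp (- delta * y) * sQ (sfe y))).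
  apply is_derive_scal. apply expd_derive.
  apply (dmult (fun y => sK * exp (- delta * y)) (fun y => sQ (sfe y))).
  apply is_derive_scal. apply expd_derive. apply Qfe_derive; auto.
  rewrite Ie_val by lra. unfold Se, Ee.
  replace (sK * exp (- delta * t) * (sfe t * psi (sfe t) * exp (delta * t))) with
    (sK * sfe t * psi (sfe t) * (exp (- delta * t) * exp (delta * t))) by ring.
  rewrite H. field. lra.
Qed.

Lemma Ie_derive t : 0 < t -> is_derive Ie t (delta * Ee t - gamma * Ie t).
Proof.
  intros Ht. pose proof (exp_inv_mul t). pose proof (fe_range t). pose proof uinf_pos.
  eapply is_derive_val. unfold Ie.
  apply (dminus (fun y => sN - sK * sfe y + gamma / beta * ln (sfe y) - Et * exp (- delta * y))
                (fun y => sK * exp (- delta * y) * sQ (sfe y))).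
  apply (dminus (fun y => sN - sK * sfe y + gamma / beta * ln (sfe y)) (fun y => Et * exp (- delta * y))).
  apply (dplus (fun y => sN - sK * sfe y) (fun y => gamma / beta * ln (sfe y))).
  apply (dminus (fun y => sN) (fun y => sK * sfe y)).
  apply dconst. apply is_derive_scal. apply fe_derive; auto.
  apply is_derive_scal. apply (dcomp ln sfe). apply is_derive_ln. lra. apply fe_derive; auto.
  apply is_derive_scal. apply expd_derive.
  apply (dmult (fun y => sK * exp (- delta * y)) (fun y => sQ (sfe y))).
  apply is_derive_scal. apply expd_derive. apply Qfe_derive; auto.
  rewrite Ie_val by lra. unfold Ee.
  replace (sK * exp (- delta * t) * (sfe t * psi (sfe t) * exp (delta * t))) with
    (sK * sfe t * psi (sfe t) * (exp (- delta * t) * exp (delta * t))) by ring.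
  rewrite H. field. split; lra.
Qed.

Lemma Se_cont t : continuous Se t.
Proof. unfold Se. apply cmult. apply cconst. apply fe_cont. Qed.

Lemma lnfe_cont t : continuous (fun y => ln (sfe y)) t.
Proof. pose proof (fe_range t). pose proof uinf_pos. apply (ccomp ln sfe). apply fe_cont. apply continuous_ln. lra. Qed.

Lemma Qfe_cont t : continuous (fun y => sQ (sfe y)) t.
Proof. pose proof (fe_range t). apply (ccomp sQ sfe). apply fe_cont. apply Q_cont. lra. Qed.

Lemma Ee_cont t : continuous Ee t.
Proof.
  unfold Ee. apply cplus. apply cmult. apply cconst. apply expd_cont.
  apply cmult. apply cmult. apply cconst. apply expd_cont. apply Qfe_cont.
Qed.

Lemma Ie_cont t : continuous Ie t.
Proof.
  unfold Ie. apply cminus. apply cminus. apply cplus. apply cminus. apply cconst.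
  apply cmult. apply cconst. apply fe_cont.
  apply cmult. apply cconst. apply lnfe_cont.
  apply cmult. apply cconst. apply expd_cont.
  apply cmult. apply cmult. apply cconst. apply expd_cont. apply Qfe_cont.
Qed.

Lemma Re_cont t : continuous Re t.
Proof. unfold Re. apply cmult. apply cconst. apply lnfe_cont. Qed.

Lemma main :
  let N := St + Et + It + Rt in
  let u0 := exp (- (beta / gamma) * Rt) in
  let uinf := exp (- (beta / gamma) * alpha) in
  let finv := phi_inv psi uinf u0 in
  let Jt := fun t => RInt (fun v => exp (delta * phi psi u0 v)) (finv t) u0 in
  let S := fun t => St * exp ((beta / gamma) * Rt) * finv t in
  let E := fun t => Et * exp (- delta * t)
             + St * exp ((beta / gamma) * Rt) * exp (- delta * t) * Jt t in
  let I := fun t => N - St * exp ((beta / gamma) * Rt) * finv t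
             + (gamma / beta) * ln (finv t) - Et * exp (- delta * t)
             - St * exp ((beta / gamma) * Rt) * exp (- delta * t) * Jt t in
  let Rf := fun t => - (gamma / beta) * ln (finv t) in
  SEIR_solution beta gamma delta St Et It Rt S E I Rf.
Proof.
  intros N u0 uinf finv Jt S E I Rf.
  assert (Hf : forall t, 0 <= t -> finv t = sfe t).
  { intros t Ht. rewrite fe_pos by auto. reflexivity. }
  assert (HJ : forall t, 0 <= t -> Jt t = sQ (sfe t)).
  { intros t Ht. unfold Jt. rewrite Hf by auto. unfold sQ.
    assert (Hu0 : u0 = su0) by reflexivity. rewrite Hu0. apply RInt_ext.
    intros x Hx. pose proof (fe_range t) as Hr.
    rewrite Rmin_left in Hx by lra. rewrite Rmax_right in Hx by lra.
    unfold sG. rewrite <- Phi_eq_phi. reflexivity. lra. }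
  assert (HS : forall t, 0 <= t -> S t = Se t).
  { intros t Ht. unfold S, Se. rewrite Hf by auto. reflexivity. }
  assert (HE : forall t, 0 <= t -> E t = Ee t).
  { intros t Ht. unfold E, Ee. rewrite HJ by auto. reflexivity. }
  assert (HI : forall t, 0 <= t -> I t = Ie t).
  { intros t Ht. unfold I, Ie. rewrite HJ, Hf by auto. reflexivity. }
  assert (HR : forall t, 0 <= t -> Rf t = Re t).
  { intros t Ht. unfold Rf, Re. rewrite Hf by auto. reflexivity. }
  assert (Hloc : forall (f g : R -> R) t, 0 < t -> (forall s, 0 <= s -> f s = g s) ->
            locally t (fun s => g s = f s)).
  { intros f g t Ht Hfg. apply (locally_of t _ t Ht). intros s Hs. apply Rabs_def2 in Hs.
    symmetry. apply Hfg. lra. }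
  assert (DS : forall t, 0 < t -> is_derive S t (- beta * S t * I t)).
  { intros t Ht. rewrite HS, HI by lra. apply (is_derive_ext_loc Se). apply Hloc; auto.
    apply Se_derive; auto. }
  assert (DE : forall t, 0 < t -> is_derive E t (beta * S t * I t - delta * E t)).
  { intros t Ht. rewrite HS, HI, HE by lra. apply (is_derive_ext_loc Ee). apply Hloc; auto.
    apply Ee_derive; auto. }
  assert (DI : forall t, 0 < t -> is_derive I t (delta * E t - gamma * I t)).
  { intros t Ht. rewrite HI, HE by lra. apply (is_derive_ext_loc Ie). apply Hloc; auto.
    apply Ie_derive; auto. }
  assert (DR : forall t, 0 < t -> is_derive Rf t (gamma * I t)).
  { intros t Ht. rewrite HI by lra. apply (is_derive_ext_loc Re). apply Hloc; auto.
    apply Re_derive; auto. }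
  assert (CS : forall t, 0 < t -> continuous S t) by (intros t Ht; eapply der_cont; apply DS; auto).
  assert (CE : forall t, 0 < t -> continuous E t) by (intros t Ht; eapply der_cont; apply DE; auto).
  assert (CI : forall t, 0 < t -> continuous I t) by (intros t Ht; eapply der_cont; apply DI; auto).
  unfold SEIR_solution. split; [|split; [|split; [|split; [|split]]]].
  - apply (cos_of_cont S Se). intros; apply Se_cont. intros; symmetry; auto.
  - apply (cos_of_cont E Ee). intros; apply Ee_cont. intros; symmetry; auto.
  - apply (cos_of_cont I Ie). intros; apply Ie_cont. intros; symmetry; auto.
  - apply (cos_of_cont Rf Re). intros; apply Re_cont. intros; symmetry; auto.
  - exists (fun t => - beta * S t * I t), (fun t => beta * S t * I t - delta * E t),
      (fun t => delta * E t - gamma * I t), (fun t => gamma * I t).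
    split; [|split; [|split; [|split]]].
    + intros t Ht. split. apply DS; auto.
      apply cmult. apply cmult. apply cconst. auto. auto.
    + intros t Ht. split. apply DE; auto.
      apply cminus. apply cmult. apply cmult. apply cconst. auto. auto. apply cmult. apply cconst. auto.
    + intros t Ht. split. apply DI; auto.
      apply cminus. apply cmult. apply cconst. auto. apply cmult. apply cconst. auto.
    + intros t Ht. split. apply DR; auto. apply cmult. apply cconst. auto.
    + intros t Ht. repeat split.
  - assert (Hf0 : finv 0 = su0) by (apply finv_0).
    assert (HJ0 : Jt 0 = 0).
    { unfold Jt. rewrite Hf0. change u0 with su0. rewrite RInt_point. reflexivity. }
    pose proof K_u0 as Ku. pose proof ln_u0 as Lu.
    unfold sK in Ku.
    repeat split.
    + unfold S. rewrite Hf0. exact Ku.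
    + unfold E. rewrite HJ0. rewrite Rmult_0_r, exp_0. ring.
    + unfold I. rewrite HJ0, Hf0, Lu. rewrite Rmult_0_r, exp_0.
      replace (St * exp (beta / gamma * Rt) * su0) with St by (rewrite Ku; auto).
      unfold N. field. lra.
    + unfold Rf. rewrite Hf0, Lu. field. lra.
Qed.

End Main.

Theorem theorem4
  (beta gamma delta St Et It Rt alpha : R) (psi psi' : R -> R)
  (Hbeta : 0 < beta) (Hgamma : 0 < gamma) (Hdelta : 0 < delta)
  (HN : 0 < St + Et + It + Rt)
  (A1 : 0 < It)
  (A2 : Et > (gamma / delta) * It)
  (A3 : St > delta * Et / (beta * It))
  (A4a : 0 <= Rt)
  (A4b : St + Et + It + Rt > St * exp ((beta / gamma) * Rt) + Rt)
  (Halpha_int : Rt < alpha < St + Et + It + Rt)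
  (Halpha_eq : alpha = (St + Et + It + Rt)
      - St * exp ((beta / gamma) * Rt) * exp (- (beta / gamma) * alpha))
  (A5 : St < (gamma / beta) * exp ((beta / gamma) * (alpha - Rt)))
  (Hpsi_cont : continuous_on_set
      (fun u => exp (- (beta / gamma) * alpha) < u <= exp (- (beta / gamma) * Rt)) psi)
  (Hpsi_pos : forall u,
      exp (- (beta / gamma) * alpha) < u <= exp (- (beta / gamma) * Rt) -> 0 < psi u)
  (Hpsi_C1 : C1_on_with
      (fun u => exp (- (beta / gamma) * alpha) < u < exp (- (beta / gamma) * Rt)) psi psi')
  (Hpsi_abel : forall u,
      exp (- (beta / gamma) * alpha) < u < exp (- (beta / gamma) * Rt) ->
      psi' u * psi u - (gamma + delta) / u * psi u =
      - delta * (beta * (St + Et + It + Rt)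
                 - beta * St * exp ((beta / gamma) * Rt) * u + gamma * ln u) / u)
  (Hpsi_init : psi (exp (- (beta / gamma) * Rt)) = beta * It) :
  let N := St + Et + It + Rt in
  let u0 := exp (- (beta / gamma) * Rt) in
  let uinf := exp (- (beta / gamma) * alpha) in
  let finv := phi_inv psi uinf u0 in
  let Jt := fun t => RInt (fun v => exp (delta * phi psi u0 v)) (finv t) u0 in
  let S := fun t => St * exp ((beta / gamma) * Rt) * finv t in
  let E := fun t => Et * exp (- delta * t)
             + St * exp ((beta / gamma) * Rt) * exp (- delta * t) * Jt t in
  let I := fun t => N - St * exp ((beta / gamma) * Rt) * finv t
             + (gamma / beta) * ln (finv t) - Et * exp (- delta * t)
             - St * exp ((beta / gamma) * Rt) * exp (- delta * t) * Jt t in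
  let Rf := fun t => - (gamma / beta) * ln (finv t) in
  SEIR_solution beta gamma delta St Et It Rt S E I Rf.
Proof.
  eapply main; eassumption.
Qed.
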